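(* On $\ell^2$ (real square-summable sequences, with canonical Hilbert basis $e_1,e_2,\dots$) define for $n=0,1,2,\dots$ the operator $A_n$ with domain $D(A_n)=\{(x_j)_{j\ge1}\in\ell^2:\sum_j j^2|x_j|^2<\infty\}$ by $A_ne_j=je_j$ for $j\neq n$ and $A_ne_n=-ne_n$ (so $A_0e_j=je_j$ for all $j$). Then each $A_n\in\mathcal S$, $\gamma(A_n,A_0)\to0$, but $\rho(A_n,A_0)\not\to 0$; more precisely, for any $\alpha\in\mathcal A$ with $\alpha(\lambda)=1$ for $\lambda$ sufficiently large and $\alpha(\lambda)=0$ for $\lambda$ sufficiently negative, $\|\alpha(A_n)-\alpha(A_0)\|=1$ for all sufficiently large $n$. In particular the identity map $(\mathcal S,\gamma)\to(\mathcal S,\rho)$ is not continuous.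
   Context: $\mathcal S$ denotes the set of densely defined selfadjoint operators on a separable real Hilbert space (operators extended complex-linearly to the complexification when needed). Riesz map $\Psi(A)=A(1+A^2)^{-1/2}$, Riesz metric $\rho(A_0,A_1)=\|\Psi(A_0)-\Psi(A_1)\|$, gap metric $\gamma(A_0,A_1)=\|(\mathbf i+A_0)^{-1}-(\mathbf i+A_1)^{-1}\|+\|(\mathbf i-A_0)^{-1}-(\mathbf i-A_1)^{-1}\|$. $\mathcal A$ is the $C^*$-algebra of continuous $f:\mathbb R\to\mathbb C$ for which both limits at $\pm\infty$ exist; $f(A)$ is defined by functional calculus. *)

(* Defs.v *)
From Stdlib Require Import Reals ClassicalEpsilon.
From Coquelicot Require Import Coquelicot.
Open Scope R_scope.

(** Vectors: real sequences indexed by nat; index j stands for the basis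
    vector e_(j+1) of the paper.  Complex sequences model the complexification. *)
Definition rseq := nat -> R.
Definition cseq := nat -> C.

Definition l2 (x : rseq) : Prop := ex_series (fun j => x j ^ 2).
Definition l2C (z : cseq) : Prop := ex_series (fun j => Cmod (z j) ^ 2).
Definition inner (x y : rseq) : R := Series (fun j => x j * y j).
Definition norm2 (x : rseq) : R := sqrt (Series (fun j => x j ^ 2)).
Definition normC (z : cseq) : R := sqrt (Series (fun j => Cmod (z j) ^ 2)).

Definition opnorm (T : rseq -> rseq) : R :=
  real (Lub_Rbar (fun r => exists x, l2 x /\ norm2 x <= 1 /\ r = norm2 (T x))).
Definition opnormC (T : cseq -> cseq) : R :=
  real (Lub_Rbar (fun r => exists z, l2C z /\ normC z <= 1 /\ r = normC (T z))).

Record op := mkop { dom : rseq -> Prop; app : rseq -> rseq }.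

(** The class S: densely defined selfadjoint (linear) operators on l^2. *)
Definition in_S (A : op) : Prop :=
  (forall x, dom A x -> l2 x /\ l2 (app A x)) /\
  (forall x y, dom A x -> dom A y -> dom A (fun j => x j + y j) /\
      app A (fun j => x j + y j) = (fun j => app A x j + app A y j)) /\
  (forall (c : R) x, dom A x -> dom A (fun j => c * x j) /\
      app A (fun j => c * x j) = (fun j => c * app A x j)) /\
  (forall x, l2 x -> forall eps, 0 < eps ->
      exists y, dom A y /\ norm2 (fun j => x j - y j) < eps) /\
  (forall x y, dom A x -> dom A y -> inner (app A x) y = inner x (app A y)) /\
  (* D(A^* ) is contained in D(A) *)
  (forall y, l2 y ->
      (exists z, l2 z /\ forall x, dom A x -> inner (app A x) y = inner x z) ->
      dom A y).

Definition re (z : cseq) : rseq := fun j => fst (z j).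
Definition im (z : cseq) : rseq := fun j => snd (z j).
Definition mkC (x y : rseq) : cseq := fun j => (x j, y j).
Definition domC (A : op) (z : cseq) : Prop := dom A (re z) /\ dom A (im z).
Definition appC (A : op) (z : cseq) : cseq := mkC (app A (re z)) (app A (im z)).

Definition is_inverse {V : Type} (L2 D : V -> Prop) (T R : V -> V) : Prop :=
  (forall v, L2 v -> D (R v) /\ T (R v) = v) /\
  (forall v, D v -> R (T v) = v).

Definition res_plus (A : op) : cseq -> cseq :=
  epsilon (inhabits (fun z => z))
    (is_inverse l2C (domC A) (fun z j => Cplus (Cmult Ci (z j)) (appC A z j))).
Definition res_minus (A : op) : cseq -> cseq :=
  epsilon (inhabits (fun z => z))
    (is_inverse l2C (domC A) (fun z j => Cminus (Cmult Ci (z j)) (appC A z j))).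

Definition gamma (A0 A1 : op) : R :=
  opnormC (fun z j => Cminus (res_plus A0 z j) (res_plus A1 z j)) +
  opnormC (fun z j => Cminus (res_minus A0 z j) (res_minus A1 z j)).

(** Riesz map Psi(A) = A (1 + A^2)^{-1/2}: B = A o Sq where Sq is a positive
    bounded selfadjoint square root of (1 + A^2)^{-1}. *)
Definition one_plus_sq (A : op) : rseq -> rseq :=
  fun x j => x j + app A (app A x) j.
Definition dom_sq (A : op) (x : rseq) : Prop := dom A x /\ dom A (app A x).
Definition is_riesz (A : op) (B : rseq -> rseq) : Prop :=
  exists Sq : rseq -> rseq,
    (forall x, l2 x -> l2 (Sq x) /\ dom A (Sq x) /\ 0 <= inner (Sq x) x) /\
    (forall x y, l2 x -> l2 y -> inner (Sq x) y = inner x (Sq y)) /\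
    is_inverse l2 (dom_sq A) (one_plus_sq A) (fun x => Sq (Sq x)) /\
    (forall x, l2 x -> B x = app A (Sq x)).
Definition Psi (A : op) : rseq -> rseq :=
  epsilon (inhabits (fun x => x)) (is_riesz A).

Definition rho (A0 A1 : op) : R := opnorm (fun x j => Psi A0 x j - Psi A1 x j).

Definition in_calA (f : R -> C) : Prop :=
  (forall x : R, continuous f x) /\
  (exists l : C, filterlim f (Rbar_locally p_infty) (locally l)) /\
  (exists l : C, filterlim f (Rbar_locally m_infty) (locally l)).

Definition diag_op (d : nat -> R) : op :=
  mkop (fun x => l2 x /\ l2 (fun j => d j * x j)) (fun x j => d j * x j).

(** Functional calculus f(A) of the diagonal selfadjoint operator diag_op d:
    multiplication by f(d j) on the complexification. *)
Definition fcalc_diag (d : nat -> R) (f : R -> C) : cseq -> cseq :=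
  fun z j => Cmult (f (d j)) (z j).

(** Eigenvalues of A_n: A_n e_k = k e_k for k <> n, A_n e_n = -n e_n
    (index j <-> e_(j+1)). *)
Definition ev (n : nat) (j : nat) : R :=
  if Nat.eqb (S j) n then - INR n else INR (S j).
Definition A_op (n : nat) : op := diag_op (ev n).

(* Main.v *)
Require Import Defs.
From Stdlib Require Import Reals Lra Lia ZArith FunctionalExtensionality ClassicalEpsilon.
From Coquelicot Require Import Coquelicot.
Open Scope R_scope.

Lemma is_series_ev (a : nat -> R) N l :
  (forall n, (N <= n)%nat -> sum_n a n = l) -> is_series a l.
Proof.
  intros H. unfold is_series.
  apply filterlim_ext_loc with (fun _ => l).
  - exists N. intros n Hn. symmetry. now apply H.
  - apply filterlim_const.
Qed.

Lemma sum_n_single (a : nat -> R) k :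
  (forall j, j <> k -> a j = 0) -> forall n, sum_n a n = if Nat.leb k n then a k else 0.
Proof.
  intros H n. induction n.
  - rewrite sum_O. destruct k; simpl. reflexivity. apply H. lia.
  - rewrite sum_Sn, IHn. unfold plus; simpl.
    destruct (Nat.leb_spec k n); destruct (Nat.leb_spec k (S n)); try lia.
    + rewrite (H (S n)) by lia. ring.
    + assert (k = S n) by lia. subst. ring.
    + rewrite (H (S n)) by lia. ring.
Qed.

Lemma is_series_single (a : nat -> R) k :
  (forall j, j <> k -> a j = 0) -> is_series a (a k).
Proof.
  intros H. apply is_series_ev with k. intros n Hn.
  rewrite (sum_n_single a k H). destruct (Nat.leb_spec k n); [reflexivity|lia].
Qed.

Lemma Series_single (a : nat -> R) k :
  (forall j, j <> k -> a j = 0) -> Series a = a k.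
Proof. intros H. apply is_series_unique. now apply is_series_single. Qed.

Lemma ex_series_single (a : nat -> R) k :
  (forall j, j <> k -> a j = 0) -> ex_series a.
Proof. intros H. exists (a k). now apply is_series_single. Qed.

Lemma ex_series_fin (a : nat -> R) N :
  (forall j, (N < j)%nat -> a j = 0) -> ex_series a.
Proof.
  intros H. exists (sum_n a N). apply is_series_ev with N.
  intros n Hn. induction Hn. reflexivity.
  rewrite sum_Sn, IHHn. unfold plus; simpl. rewrite H by lia. ring.
Qed.

Lemma Series_0 : Series (fun _ => 0) = 0.
Proof. apply (Series_single (fun _ => 0) 0). auto. Qed.

Lemma Series_nonneg (a : nat -> R) : (forall n, 0 <= a n) -> ex_series a -> 0 <= Series a.
Proof.
  intros H1 H2. rewrite <- Series_0. apply Series_le; auto. intros; split; auto; lra.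
Qed.

Definition e (k : nat) : rseq := fun j => if Nat.eq_dec j k then 1 else 0.

Lemma Series_e (f : nat -> R) k : Series (fun j => f j * e k j) = f k.
Proof.
  rewrite (Series_single _ k).
  - unfold e. destruct (Nat.eq_dec k k); [ring|congruence].
  - intros j Hj. unfold e. destruct (Nat.eq_dec j k); [congruence|ring].
Qed.

Lemma Series_e' (f : nat -> R) k : Series (fun j => e k j * f j) = f k.
Proof. rewrite <- (Series_e f k). apply Series_ext. intros; ring. Qed.

Lemma l2_e k : l2 (e k).
Proof. apply (ex_series_single _ k). intros j Hj. unfold e. destruct (Nat.eq_dec j k); [congruence|ring]. Qed.

Lemma l2_le (x y : rseq) : (forall j, Rabs (x j) <= Rabs (y j)) -> l2 y -> l2 x.
Proof.
  intros H Hy. apply (ex_series_le (K:=R_AbsRing) (V:=R_CompleteNormedModule)) with (fun j => y j ^ 2); auto.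
  intros n. change (Rabs (x n ^ 2) <= y n ^ 2). specialize (H n).
  rewrite Rabs_pos_eq by nra. rewrite <- (pow2_abs (x n)), <- (pow2_abs (y n)).
  pose proof (Rabs_pos (x n)). nra.
Qed.

Lemma l2_plus x y : l2 x -> l2 y -> l2 (fun j => x j + y j).
Proof.
  intros Hx Hy. apply (ex_series_le (K:=R_AbsRing) (V:=R_CompleteNormedModule)) with (fun j => 2 * x j ^ 2 + 2 * y j ^ 2).
  - intros n. change (Rabs ((x n + y n)^2) <= 2 * x n ^ 2 + 2 * y n ^ 2). rewrite Rabs_pos_eq by apply pow2_ge_0. pose proof (pow2_ge_0 (x n - y n)). nra.
  - apply ex_series_ext with (fun j => plus (scal 2 (x j ^2)) (scal 2 (y j^2))).
    + intros; reflexivity.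
    + apply (ex_series_plus (K:=R_AbsRing) (V:=R_NormedModule)); apply (ex_series_scal_l (K:=R_AbsRing) (V:=R_NormedModule)); auto.
Qed.

Lemma l2_scal c x : l2 x -> l2 (fun j => c * x j).
Proof.
  intros Hx. apply ex_series_ext with (fun j => scal (c^2) (x j ^ 2)).
  - intros n. unfold scal; simpl. unfold mult; simpl. ring.
  - apply (ex_series_scal_l (K:=R_AbsRing) (V:=R_NormedModule)). auto.
Qed.

Lemma l2_ext x y : (forall j, x j = y j) -> l2 x -> l2 y.
Proof. intros H Hx. apply ex_series_ext with (fun j => x j ^ 2); auto. intros; now rewrite H. Qed.

Lemma sqrt_lt_sq a eps : 0 < eps -> a < eps ^ 2 -> sqrt a < eps.
Proof.
  intros He Ha. destruct (Rle_lt_dec a 0).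
  - rewrite sqrt_neg_0; auto.
  - rewrite <- (sqrt_pow2 eps) by lra. apply sqrt_lt_1_alt. lra.
Qed.

Lemma density x : l2 x -> forall eps, 0 < eps ->
  exists N, norm2 (fun j => x j - (if Nat.leb j N then x j else 0)) < eps.
Proof.
  intros Hx eps He.
  pose proof (Series_correct _ Hx) as HS.
  assert (Hl : is_lim_seq (sum_n (fun j => x j ^ 2)) (Series (fun j => x j ^ 2))) by exact HS.
  apply is_lim_seq_spec in Hl.
  assert (He2 : 0 < eps ^ 2) by nra.
  destruct (Hl (mkposreal _ He2)) as [N HN]. cbn [pos] in HN.
  exists N. unfold norm2. apply sqrt_lt_sq; auto.
  rewrite (Series_ext _ (fun j => if Nat.leb j N then 0 else x j ^ 2)).
  2:{ intros j. destruct (Nat.leb j N); ring. }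
  rewrite (Series_incr_n_aux _ (S N)).
  2:{ intros k Hk. destruct (Nat.leb_spec k N); [reflexivity|lia]. }
  rewrite (Series_ext _ (fun k => x (S N + k)%nat ^ 2)).
  2:{ intros k. destruct (Nat.leb_spec (S N + k) N); [lia|reflexivity]. }
  pose proof (Series_incr_n _ (S N) ltac:(lia) Hx) as E. cbn [Init.Nat.pred] in E.
  rewrite <- sum_n_Reals in E.
  specialize (HN N (le_n _)). apply Rabs_def2 in HN. lra.
Qed.

Lemma in_S_diag (d : nat -> R) : in_S (diag_op d).
Proof.
  unfold in_S, diag_op; simpl. split; [|split; [|split; [|split; [|split]]]].
  - intros x [H1 H2]; auto.
  - intros x y [Hx1 Hx2] [Hy1 Hy2]. split; [split|].
    + now apply l2_plus.
    + apply l2_ext with (fun j => d j * x j + d j * y j). intros; ring. now apply l2_plus.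
    + apply functional_extensionality; intros; ring.
  - intros c x [Hx1 Hx2]. split; [split|].
    + now apply l2_scal.
    + apply l2_ext with (fun j => c * (d j * x j)). intros; ring. now apply l2_scal.
    + apply functional_extensionality; intros; ring.
  - intros x Hx eps He. destruct (density x Hx eps He) as [N HN].
    exists (fun j => if Nat.leb j N then x j else 0). split; auto.
    split; apply ex_series_fin with N; intros j Hj; destruct (Nat.leb_spec j N); try lia; ring.
  - intros x y _ _. unfold inner. apply Series_ext. intros; ring.
  - intros y Hy [z [Hz H]]. split; auto.
    apply l2_ext with z; auto. intros k.
    assert (Hd : l2 (e k) /\ l2 (fun j => d j * e k j)).
    { split. apply l2_e. apply (ex_series_single _ k). intros j Hj. unfold e. destruct (Nat.eq_dec j k); [congruence|ring]. }
    specialize (H _ Hd). unfold inner in H.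
    rewrite Series_e' in H.
    rewrite (Series_ext _ (fun j => (d j * y j) * e k j)) in H by (intros; ring).
    rewrite Series_e in H. lra.
Qed.

Lemma Lub_bounds (E : R -> Prop) c a : (forall r, E r -> r <= c) -> E a ->
  (forall r, E r -> r <= real (Lub_Rbar E)) /\ real (Lub_Rbar E) <= c.
Proof.
  intros Hc Ha. destruct (Lub_Rbar_correct E) as [H1 H2].
  destruct (Lub_Rbar E) as [l| |] eqn:El; simpl.
  - split. intros r Hr. apply (H1 r Hr). apply (H2 c). intros r Hr. apply Hc; auto.
  - exfalso. specialize (H2 c). simpl in H2. apply H2. intros r Hr. apply Hc; auto.
  - exfalso. specialize (H1 a Ha). simpl in H1. auto.
Qed.

Lemma sqrt_sq_abs a : sqrt (a ^ 2) = Rabs a.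
Proof. rewrite <- Rsqr_pow2. apply sqrt_Rsqr_abs. Qed.

Lemma ex_scal (c : R) (a : nat -> R) : ex_series a -> ex_series (fun j => c * a j).
Proof. intros H. apply (ex_series_scal_l (K:=R_AbsRing) (V:=R_NormedModule) c a H). Qed.

Lemma ex_le (a b : nat -> R) : (forall j, 0 <= a j <= b j) -> ex_series b -> ex_series a.
Proof.
  intros H Hb. apply (ex_series_le (K:=R_AbsRing) (V:=R_CompleteNormedModule)) with b; auto.
  intros n. change (Rabs (a n) <= b n). rewrite Rabs_pos_eq; apply H.
Qed.

Lemma sqrt_bound (S c : R) : 0 <= c -> 0 <= S -> S <= 1 -> forall T, T <= c ^ 2 * S -> sqrt T <= c.
Proof.
  intros Hc HS HS1 T HT. apply Rle_trans with (sqrt (c^2 * S)).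
  apply sqrt_le_1_alt; auto.
  rewrite sqrt_mult_alt by (apply pow2_ge_0). rewrite sqrt_pow2 by auto.
  rewrite <- (Rmult_1_r c) at 2. apply Rmult_le_compat_l; auto.
  rewrite <- sqrt_1. apply sqrt_le_1_alt. auto.
Qed.

Lemma opnorm_diag (T : rseq -> rseq) (m : nat -> R) c :
  0 <= c -> (forall j, Rabs (m j) <= c) -> (forall x, l2 x -> T x = fun j => m j * x j) ->
  opnorm T <= c /\ (forall k, Rabs (m k) <= opnorm T).
Proof.
  intros Hc Hm HT. unfold opnorm.
  set (E := fun r => exists x, l2 x /\ norm2 x <= 1 /\ r = norm2 (T x)).
  assert (Hub : forall r, E r -> r <= c).
  { intros r [x [Hx [Hn ->]]]. rewrite (HT x Hx). unfold norm2 in *.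
    assert (HS0 : 0 <= Series (fun j => x j ^ 2)) by (apply Series_nonneg; auto; intros; apply pow2_ge_0).
    assert (HS1 : Series (fun j => x j ^ 2) <= 1).
    { destruct (Rle_lt_dec (Series (fun j => x j ^ 2)) 1); auto.
      exfalso. assert (1 < sqrt (Series (fun j => x j ^ 2))). rewrite <- sqrt_1. apply sqrt_lt_1_alt; lra. lra. }
    apply (sqrt_bound (Series (fun j => x j ^ 2))); auto.
    rewrite <- Series_scal_l. apply Series_le.
    - intros j. split. apply pow2_ge_0. rewrite Rpow_mult_distr.
      apply Rmult_le_compat_r. apply pow2_ge_0.
      rewrite <- (pow2_abs (m j)). specialize (Hm j). pose proof (Rabs_pos (m j)). nra.
    - apply ex_scal. auto. }
  assert (Hel : forall k, E (Rabs (m k))).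
  { intros k. exists (e k). split. apply l2_e. split.
    - unfold norm2. rewrite (Series_single _ k). unfold e. destruct (Nat.eq_dec k k); [|congruence].
      rewrite pow1, sqrt_1. lra.
      intros j Hj. unfold e. destruct (Nat.eq_dec j k); [congruence|ring].
    - rewrite (HT _ (l2_e k)). unfold norm2. rewrite (Series_single _ k).
      unfold e. destruct (Nat.eq_dec k k); [|congruence]. rewrite Rmult_1_r. now rewrite sqrt_sq_abs.
      intros j Hj. unfold e. destruct (Nat.eq_dec j k); [congruence|ring]. }
  destruct (Lub_bounds E c _ Hub (Hel 0%nat)) as [H1 H2]. split; auto.
Qed.

Definition eC (k : nat) : cseq := fun j => if Nat.eq_dec j k then RtoC 1 else RtoC 0.

Lemma l2C_eC k : l2C (eC k).
Proof. apply (ex_series_single _ k). intros j Hj. unfold eC. destruct (Nat.eq_dec j k); [congruence|].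
  rewrite Cmod_0. ring. Qed.

Lemma opnormC_diag (T : cseq -> cseq) (m : nat -> C) c :
  0 <= c -> (forall j, Cmod (m j) <= c) -> (forall z, l2C z -> T z = fun j => Cmult (m j) (z j)) ->
  opnormC T <= c /\ (forall k, Cmod (m k) <= opnormC T).
Proof.
  intros Hc Hm HT. unfold opnormC.
  set (E := fun r => exists z, l2C z /\ normC z <= 1 /\ r = normC (T z)).
  assert (Hub : forall r, E r -> r <= c).
  { intros r [x [Hx [Hn ->]]]. rewrite (HT x Hx). unfold normC in *.
    assert (HS0 : 0 <= Series (fun j => Cmod (x j) ^ 2)) by (apply Series_nonneg; auto; intros; apply pow2_ge_0).
    assert (HS1 : Series (fun j => Cmod (x j) ^ 2) <= 1).
    { destruct (Rle_lt_dec (Series (fun j => Cmod (x j) ^ 2)) 1); auto.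
      exfalso. assert (1 < sqrt (Series (fun j => Cmod (x j) ^ 2))). rewrite <- sqrt_1. apply sqrt_lt_1_alt; lra. lra. }
    apply (sqrt_bound (Series (fun j => Cmod (x j) ^ 2))); auto.
    rewrite <- Series_scal_l. apply Series_le.
    - intros j. split. apply pow2_ge_0. rewrite Cmod_mult, Rpow_mult_distr.
      apply Rmult_le_compat_r. apply pow2_ge_0.
      specialize (Hm j). pose proof (Cmod_ge_0 (m j)). nra.
    - apply ex_scal. auto. }
  assert (Hel : forall k, E (Cmod (m k))).
  { intros k. exists (eC k). split. apply l2C_eC. split.
    - unfold normC. rewrite (Series_single _ k). unfold eC. destruct (Nat.eq_dec k k); [|congruence].
      rewrite Cmod_1, pow1, sqrt_1. lra.
      intros j Hj. unfold eC. destruct (Nat.eq_dec j k); [congruence|]. rewrite Cmod_0; ring.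
    - rewrite (HT _ (l2C_eC k)). unfold normC. rewrite (Series_single _ k).
      unfold eC. destruct (Nat.eq_dec k k); [|congruence]. rewrite Cmod_mult, Cmod_1, Rmult_1_r.
      rewrite sqrt_sq_abs. symmetry. apply Rabs_pos_eq, Cmod_ge_0.
      intros j Hj. unfold eC. destruct (Nat.eq_dec j k); [congruence|]. rewrite Cmod_mult, Cmod_0. ring. }
  destruct (Lub_bounds E c _ Hub (Hel 0%nat)) as [H1 H2]. split; auto.
Qed.

Lemma l2_from_C (x : rseq) (z : cseq) : (forall j, Rabs (x j) <= Cmod (z j)) -> l2C z -> l2 x.
Proof.
  intros H Hz. apply ex_le with (fun j => Cmod (z j) ^ 2); auto.
  intros j. split. apply pow2_ge_0. rewrite <- (pow2_abs (x j)). specialize (H j).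
  pose proof (Rabs_pos (x j)). nra.
Qed.

Lemma fst_le (u : C) : Rabs (fst u) <= Cmod u.
Proof. eapply Rle_trans. apply Rmax_l. apply Rmax_Cmod. Qed.
Lemma snd_le (u : C) : Rabs (snd u) <= Cmod u.
Proof. eapply Rle_trans. apply Rmax_r. apply Rmax_Cmod. Qed.

Lemma Cmod_ge1_neq0 (w : C) : 1 <= Cmod w -> w <> RtoC 0.
Proof. intros H E. rewrite E, Cmod_0 in H. lra. Qed.

Lemma res_general (d : nat -> R) (w : nat -> C) (T : cseq -> cseq) :
  (forall j, 1 <= Cmod (w j)) -> (forall j, Rabs (d j) <= Cmod (w j)) ->
  (forall z, T z = fun j => Cmult (w j) (z j)) ->
  (exists R, is_inverse l2C (domC (diag_op d)) T R) /\
  (forall R, is_inverse l2C (domC (diag_op d)) T R -> forall z, l2C z ->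
     R z = fun j => Cmult (Cinv (w j)) (z j)).
Proof.
  intros Hw1 Hwd HT.
  set (Rp := fun (z : cseq) j => Cmult (Cinv (w j)) (z j)).
  assert (Hmod : forall z j, Cmod (w j) * Cmod (Rp z j) = Cmod (z j)).
  { intros z j. rewrite <- Cmod_mult. unfold Rp. rewrite Cmult_assoc, Cinv_r, Cmult_1_l. auto.
    apply Cmod_ge1_neq0; auto. }
  assert (Hdom : forall z, l2C z -> domC (diag_op d) (Rp z)).
  { intros z Hz. unfold domC, diag_op; simpl. unfold re, im.
    assert (forall j, 0 <= Cmod (Rp z j)) by (intros; apply Cmod_ge_0).
    split; split; apply l2_from_C with z; auto; intros j; specialize (Hmod z j); specialize (Hw1 j);
      specialize (Hwd j); specialize (H j); try rewrite Rabs_mult;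
      pose proof (fst_le (Rp z j)); pose proof (snd_le (Rp z j));
      pose proof (Rabs_pos (d j)); pose proof (Rabs_pos (fst (Rp z j))); pose proof (Rabs_pos (snd (Rp z j))); nra. }
  assert (HTR : forall z, T (Rp z) = z).
  { intros z. rewrite HT. apply functional_extensionality. intros j. unfold Rp.
    rewrite Cmult_assoc, Cinv_r, Cmult_1_l. auto. apply Cmod_ge1_neq0; auto. }
  split.
  - exists Rp. split.
    + intros v Hv. split; auto.
    + intros v _. rewrite HT. apply functional_extensionality. intros j. unfold Rp.
      rewrite Cmult_assoc, Cinv_l, Cmult_1_l. auto. apply Cmod_ge1_neq0; auto.
  - intros R [H1 H2] z Hz. fold (Rp z).
    specialize (H2 (Rp z) (Hdom z Hz)). rewrite HTR in H2. auto.
Qed.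

Lemma sq_bounds a : 1 <= sqrt (a^2+1) /\ Rabs a <= sqrt (a^2+1).
Proof.
  split.
  - apply Rle_trans with (sqrt 1). rewrite sqrt_1; lra. apply sqrt_le_1_alt. pose proof (pow2_ge_0 a). lra.
  - rewrite <- sqrt_sq_abs. apply sqrt_le_1_alt. lra.
Qed.

Lemma Cmod_Ci_plus a : Cmod (Cplus Ci (RtoC a)) = sqrt (a^2+1).
Proof. unfold Cmod, Cplus, Ci, RtoC; simpl. f_equal. ring. Qed.
Lemma Cmod_Ci_minus a : Cmod (Cminus Ci (RtoC a)) = sqrt (a^2+1).
Proof. unfold Cmod, Cminus, Cplus, Copp, Ci, RtoC; simpl. f_equal. ring. Qed.

Lemma res_plus_diag d z : l2C z ->
  res_plus (diag_op d) z = fun j => Cmult (Cinv (Cplus Ci (RtoC (d j)))) (z j).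
Proof.
  intros Hz.
  assert (HT : forall z : cseq, (fun z j => Cplus (Cmult Ci (z j)) (appC (diag_op d) z j)) z
      = fun j => Cmult (Cplus Ci (RtoC (d j))) (z j)).
  { intros u. apply functional_extensionality. intros j. unfold appC, mkC, re, im; simpl.
    destruct (u j) as [a b]. unfold Cplus, Cmult, Ci, RtoC; simpl. f_equal; ring. }
  assert (Hw1 : forall j, 1 <= Cmod (Cplus Ci (RtoC (d j)))).
  { intros j. rewrite Cmod_Ci_plus. apply sq_bounds. }
  assert (Hwd : forall j, Rabs (d j) <= Cmod (Cplus Ci (RtoC (d j)))).
  { intros j. rewrite Cmod_Ci_plus. apply sq_bounds. }
  destruct (res_general d _ _ Hw1 Hwd HT) as [Hex Hun].
  unfold res_plus. apply Hun; auto. apply epsilon_spec. auto.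
Qed.

Lemma res_minus_diag d z : l2C z ->
  res_minus (diag_op d) z = fun j => Cmult (Cinv (Cminus Ci (RtoC (d j)))) (z j).
Proof.
  intros Hz.
  assert (HT : forall z : cseq, (fun z j => Cminus (Cmult Ci (z j)) (appC (diag_op d) z j)) z
      = fun j => Cmult (Cminus Ci (RtoC (d j))) (z j)).
  { intros u. apply functional_extensionality. intros j. unfold appC, mkC, re, im; simpl.
    destruct (u j) as [a b]. unfold Cminus, Copp, Cplus, Cmult, Ci, RtoC; simpl. f_equal; ring. }
  assert (Hw1 : forall j, 1 <= Cmod (Cminus Ci (RtoC (d j)))).
  { intros j. rewrite Cmod_Ci_minus. apply sq_bounds. }
  assert (Hwd : forall j, Rabs (d j) <= Cmod (Cminus Ci (RtoC (d j)))).
  { intros j. rewrite Cmod_Ci_minus. apply sq_bounds. }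
  destruct (res_general d _ _ Hw1 Hwd HT) as [Hex Hun].
  unfold res_minus. apply Hun; auto. apply epsilon_spec. auto.
Qed.

Definition cc (a : R) : R := / sqrt (a^2 + 1).

Lemma cfacts a : 0 < cc a /\ cc a <= 1 /\ Rabs (a * cc a) <= 1 /\ cc a * cc a * (a^2+1) = 1.
Proof.
  destruct (sq_bounds a) as [H1 H2]. unfold cc.
  set (s := sqrt (a^2+1)) in *.
  assert (Hs : s * s = a^2 + 1) by (apply sqrt_sqrt; pose proof (pow2_ge_0 a); lra).
  assert (0 < s) by lra.
  split; [|split; [|split]].
  - apply Rinv_0_lt_compat; lra.
  - rewrite <- Rinv_1. apply Rinv_le_contravar; lra.
  - rewrite Rabs_mult, Rabs_inv, (Rabs_pos_eq s) by lra.
    apply Rmult_le_reg_r with s; auto. rewrite Rmult_assoc, Rinv_l by lra. lra.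
  - rewrite <- Hs. field. lra.
Qed.

Lemma e_eq k : e k k = 1.
Proof. unfold e. destruct (Nat.eq_dec k k); congruence. Qed.
Lemma e_neq k j : j <> k -> e k j = 0.
Proof. intros H. unfold e. destruct (Nat.eq_dec j k); congruence. Qed.

Lemma l2_mult (m : nat -> R) x : (forall j, Rabs (m j) <= 1) -> l2 x -> l2 (fun j => m j * x j).
Proof.
  intros Hm Hx. apply l2_le with x; auto. intros j. rewrite Rabs_mult.
  specialize (Hm j). pose proof (Rabs_pos (x j)). pose proof (Rabs_pos (m j)). nra.
Qed.

Lemma Psi_diag d : (forall j k, j <> k -> d j ^ 2 <> d k ^ 2) -> forall x, l2 x ->
  Psi (diag_op d) x = fun j => d j * (cc (d j) * x j).
Proof.
  intros Hd.
  set (c := fun j => cc (d j)).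
  assert (Hc : forall j, 0 < c j /\ c j <= 1 /\ Rabs (d j * c j) <= 1 /\ c j * c j * (d j^2+1) = 1)
    by (intros; apply cfacts).
  assert (Hc1 : forall j, Rabs (c j) <= 1).
  { intros j. destruct (Hc j) as [? [? ?]]. rewrite Rabs_pos_eq; lra. }
  assert (Hcc : forall j, Rabs (c j * c j) <= 1).
  { intros j. rewrite Rabs_mult. specialize (Hc1 j). pose proof (Rabs_pos (c j)). nra. }
  assert (Hdcc : forall j, Rabs (d j * (c j * c j)) <= 1).
  { intros j. rewrite <- Rmult_assoc, Rabs_mult. destruct (Hc j) as [_ [_ [H _]]].
    specialize (Hc1 j). pose proof (Rabs_pos (c j)). pose proof (Rabs_pos (d j * c j)). nra. }
  assert (Hddcc : forall j, Rabs (d j * (d j * (c j * c j))) <= 1).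
  { intros j. replace (d j * (d j * (c j * c j))) with ((d j * c j) * (d j * c j)) by ring.
    rewrite Rabs_mult. destruct (Hc j) as [_ [_ [H _]]].
    pose proof (Rabs_pos (d j * c j)). nra. }
  assert (Hex : exists B, is_riesz (diag_op d) B).
  { set (Sq0 := fun (x : rseq) j => c j * x j).
    exists (fun x => app (diag_op d) (Sq0 x)). exists Sq0. split; [|split; [|split]].
    - intros x Hx. split; [|split].
      + apply l2_mult; auto.
      + simpl. split. apply l2_mult; auto.
        apply l2_ext with (fun j => (d j * c j) * x j). intros; unfold Sq0; ring.
        apply l2_mult; auto. apply Hc.
      + unfold inner, Sq0. apply Series_nonneg.
        * intros j. replace (c j * x j * x j) with (c j * x j ^ 2) by ring.
          apply Rmult_le_pos. left; apply Hc. apply pow2_ge_0.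
        * apply ex_le with (fun j => x j ^ 2); auto. intros j.
          replace (c j * x j * x j) with (c j * x j ^ 2) by ring.
          destruct (Hc j) as [? [? _]]. pose proof (pow2_ge_0 (x j)). split; nra.
    - intros x y _ _. unfold inner, Sq0. apply Series_ext. intros; ring.
    - split.
      + intros v Hv. split.
        * unfold dom_sq; simpl. unfold Sq0.
          assert (l2 (fun j => c j * (c j * v j))).
          { apply l2_ext with (fun j => (c j * c j) * v j). intros; ring. apply l2_mult; auto. }
          assert (l2 (fun j => d j * (c j * (c j * v j)))).
          { apply l2_ext with (fun j => (d j * (c j * c j)) * v j). intros; ring. apply l2_mult; auto. }
          repeat split; auto.
          apply l2_ext with (fun j => (d j * (d j * (c j * c j))) * v j). intros; ring. apply l2_mult; auto.
        * unfold one_plus_sq, Sq0; simpl. apply functional_extensionality. intros j.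
          destruct (Hc j) as [_ [_ [_ H]]].
          replace (c j * (c j * v j) + d j * (d j * (c j * (c j * v j)))) with (c j * c j * (d j^2+1) * v j) by ring.
          rewrite H. ring.
      + intros v _. unfold one_plus_sq, Sq0; simpl. apply functional_extensionality. intros j.
        destruct (Hc j) as [_ [_ [_ H]]].
        replace (c j * (c j * (v j + d j * (d j * v j)))) with (c j * c j * (d j^2+1) * v j) by ring.
        rewrite H. ring.
    - intros; reflexivity. }
  pose proof (epsilon_spec (inhabits (fun x : rseq => x)) (is_riesz (diag_op d)) Hex) as HP.
  fold (Psi (diag_op d)) in HP.
  destruct HP as [S [H1 [H2 [[H3a H3b] H4]]]].
  assert (SS : forall v, l2 v -> S (S v) = fun j => c j * c j * v j).
  { intros v Hv. destruct (H3a v Hv) as [_ E]. apply functional_extensionality. intros j.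
    apply (f_equal (fun f => f j)) in E. unfold one_plus_sq in E; simpl in E.
    destruct (Hc j) as [_ [_ [_ H]]]. rewrite <- E.
    replace (c j * c j * (S (S v) j + d j * (d j * S (S v) j))) with
      (c j * c j * (d j^2+1) * S (S v) j) by ring. rewrite H. ring. }
  assert (coord : forall x, l2 x -> forall j, S x j = inner x (S (e j))).
  { intros x Hx j. rewrite <- H2; auto using l2_e. unfold inner. now rewrite Series_e. }
  assert (scal : forall x a, l2 x -> S (fun i => a * x i) = fun i => a * S x i).
  { intros x a Hx. apply functional_extensionality. intros j.
    rewrite coord by (apply l2_scal; auto). rewrite (coord x Hx).
    unfold inner. rewrite <- Series_scal_l. apply Series_ext. intros; ring. }
  assert (SSe : forall k, S (S (e k)) = fun j => (c k * c k) * e k j).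
  { intros k. rewrite SS by apply l2_e. apply functional_extensionality. intros j.
    unfold e. destruct (Nat.eq_dec j k); [subst; ring | ring]. }
  assert (Hu : forall k, l2 (S (e k))) by (intros k; apply H1, l2_e).
  assert (Off : forall k j, j <> k -> S (e k) j = 0).
  { intros k j Hjk.
    assert (E1 := SS _ (Hu k)).
    rewrite SSe, scal in E1 by apply l2_e.
    apply (f_equal (fun f => f j)) in E1. simpl in E1.
    assert (c j * c j <> c k * c k).
    { intros E. apply (Hd j k Hjk).
      destruct (Hc j) as [Hj0 [_ [_ Hj]]]. destruct (Hc k) as [Hk0 [_ [_ Hk]]].
      rewrite E in Hj. rewrite <- Hk in Hj.
      apply Rmult_eq_reg_l in Hj. lra. apply Rgt_not_eq. apply Rmult_lt_0_compat; auto. }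
    assert ((c k * c k - c j * c j) * S (e k) j = 0) by lra.
    apply Rmult_integral in H0. destruct H0; auto. lra. }
  assert (Diag : forall k, S (e k) k = c k).
  { intros k.
    assert (Eu : S (e k) = fun j => S (e k) k * e k j).
    { apply functional_extensionality. intros j.
      destruct (Nat.eq_dec j k). subst; rewrite e_eq; ring. rewrite Off, e_neq by auto. ring. }
    assert (E1 := SSe k). rewrite Eu in E1. rewrite scal in E1 by apply l2_e.
    apply (f_equal (fun f => f k)) in E1. simpl in E1.
    rewrite !e_eq in E1.
    assert (Hpos : 0 <= S (e k) k).
    { destruct (H1 (e k) (l2_e k)) as [_ [_ Hp]]. unfold inner in Hp. rewrite Series_e in Hp. auto. }
    destruct (Hc k) as [Hk0 _].
    assert ((S (e k) k - c k) * (S (e k) k + c k) = 0) by lra.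
    apply Rmult_integral in H. destruct H; lra. }
  intros x Hx. rewrite H4 by auto. simpl. apply functional_extensionality. intros j.
  f_equal. rewrite (coord x Hx). unfold inner.
  rewrite (Series_ext _ (fun i => (x i * c j) * e j i)).
  rewrite Series_e. fold (c j). ring.
  intros i. destruct (Nat.eq_dec i j). subst. rewrite Diag, e_eq. ring.
  rewrite Off, e_neq by auto. ring.
Qed.

Lemma ev0 j : ev 0 j = INR (S j).
Proof. reflexivity. Qed.

Lemma ev_ne n j : S j <> n -> ev n j = ev 0 j.
Proof. intros H. unfold ev. destruct (Nat.eqb_spec (S j) n); [congruence|]. reflexivity. Qed.

Lemma ev_eq n j : S j = n -> ev n j = - INR n /\ ev 0 j = INR n.
Proof. intros H. unfold ev. destruct (Nat.eqb_spec (S j) n); [|congruence]. simpl. subst. auto. Qed.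

Lemma ev_sq n j : ev n j ^ 2 = INR (S j) ^ 2.
Proof. unfold ev. destruct (Nat.eqb_spec (S j) n). subst. ring. reflexivity. Qed.

Lemma ev_distinct n : forall j k, j <> k -> ev n j ^ 2 <> ev n k ^ 2.
Proof.
  intros j k Hjk E. rewrite !ev_sq in E. apply Hjk.
  assert (INR (S j) = INR (S k)).
  { pose proof (lt_0_INR (S j) ltac:(lia)). pose proof (lt_0_INR (S k) ltac:(lia)).
    assert ((INR (S j) - INR (S k)) * (INR (S j) + INR (S k)) = 0) by nra.
    apply Rmult_integral in H1. destruct H1; lra. }
  apply INR_eq in H. lia.
Qed.

Lemma Cmod_minus_le (u v : C) : Cmod (Cminus u v) <= Cmod u + Cmod v.
Proof. unfold Cminus. eapply Rle_trans. apply Cmod_triangle. rewrite Cmod_opp. lra. Qed.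

Lemma sq_le a b : 0 <= a -> 0 <= b -> a * a <= b * b -> a <= b.
Proof. intros. nra. Qed.

Lemma inv_sqrt_bound n : / sqrt (INR n ^ 2 + 1) <= 2 * / INR (S n).
Proof.
  rewrite S_INR. pose proof (pos_INR n).
  set (s := sqrt (INR n ^ 2 + 1)).
  assert (Hs : s * s = INR n ^ 2 + 1) by (apply sqrt_sqrt; pose proof (pow2_ge_0 (INR n)); lra).
  assert (Hs0 : 0 <= s) by apply sqrt_pos.
  assert (Hb : (INR n + 1) / 2 <= s).
  { apply sq_le. lra. auto. rewrite Hs. pose proof (pow2_ge_0 (INR n - 1/3)). nra. }
  replace (2 * / (INR n + 1)) with (/ ((INR n + 1) / 2)) by (field; lra).
  apply Rinv_le_contravar; lra.
Qed.

Lemma pair_bound (a b : R) n : (a = b \/ (a ^ 2 = INR n ^ 2 /\ b ^ 2 = INR n ^ 2)) ->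
  Cmod (Cminus (Cinv (Cplus Ci (RtoC a))) (Cinv (Cplus Ci (RtoC b)))) <= 4 * / INR (S n) /\
  Cmod (Cminus (Cinv (Cminus Ci (RtoC a))) (Cinv (Cminus Ci (RtoC b)))) <= 4 * / INR (S n).
Proof.
  assert (Hp : 0 < / INR (S n)) by (apply Rinv_0_lt_compat, lt_0_INR; lia).
  intros [-> | [Ha Hb]].
  - replace (Cminus (Cinv (Cplus Ci (RtoC b))) (Cinv (Cplus Ci (RtoC b)))) with (RtoC 0) by ring.
    replace (Cminus (Cinv (Cminus Ci (RtoC b))) (Cinv (Cminus Ci (RtoC b)))) with (RtoC 0) by ring.
    rewrite Cmod_0. lra.
  - pose proof (inv_sqrt_bound n).
    assert (Hne : forall x, 1 <= Cmod x -> x <> RtoC 0) by apply Cmod_ge1_neq0.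
    split; (eapply Rle_trans; [apply Cmod_minus_le|]);
    rewrite !Cmod_inv; try apply Hne;
    rewrite ?Cmod_Ci_plus, ?Cmod_Ci_minus, ?Ha, ?Hb; try apply sq_bounds; lra.
Qed.

Lemma gamma_bound n : 0 <= gamma (A_op n) (A_op 0) <= 8 * / INR (S n) /\
                      0 <= gamma (A_op 0) (A_op n) <= 8 * / INR (S n).
Proof.
  assert (Hp : 0 < / INR (S n)) by (apply Rinv_0_lt_compat, lt_0_INR; lia).
  assert (HP : forall j, (ev n j = ev 0 j \/ (ev n j ^ 2 = INR n ^ 2 /\ ev 0 j ^ 2 = INR n ^ 2))).
  { intros j. destruct (Nat.eq_dec (S j) n) as [e0|e0].
    - right. destruct (ev_eq n j e0) as [-> ->]. split; ring.
    - left. now apply ev_ne. }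
  assert (HP' : forall j, (ev 0 j = ev n j \/ (ev 0 j ^ 2 = INR n ^ 2 /\ ev n j ^ 2 = INR n ^ 2))).
  { intros j. destruct (HP j) as [H|[H1 H2]]; [left; auto | right; auto]. }
  assert (G : forall d1 d2, (forall j, d1 j = d2 j \/ (d1 j ^ 2 = INR n ^ 2 /\ d2 j ^ 2 = INR n ^ 2)) ->
     0 <= gamma (diag_op d1) (diag_op d2) <= 8 * / INR (S n)).
  { intros d1 d2 Hd. unfold gamma.
    destruct (opnormC_diag (fun z j => Cminus (res_plus (diag_op d1) z j) (res_plus (diag_op d2) z j))
      (fun j => Cminus (Cinv (Cplus Ci (RtoC (d1 j)))) (Cinv (Cplus Ci (RtoC (d2 j))))) (4 * / INR (S n)))
      as [U1 L1].
    - lra.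
    - intros j. apply (pair_bound _ _ n (Hd j)).
    - intros z Hz. rewrite !res_plus_diag by auto. apply functional_extensionality. intros j. ring.
    - destruct (opnormC_diag (fun z j => Cminus (res_minus (diag_op d1) z j) (res_minus (diag_op d2) z j))
      (fun j => Cminus (Cinv (Cminus Ci (RtoC (d1 j)))) (Cinv (Cminus Ci (RtoC (d2 j))))) (4 * / INR (S n)))
      as [U2 L2].
      + lra.
      + intros j. apply (pair_bound _ _ n (Hd j)).
      + intros z Hz. rewrite !res_minus_diag by auto. apply functional_extensionality. intros j. ring.
      + specialize (L1 0%nat). specialize (L2 0%nat). pose proof (Cmod_ge_0 (Cminus (Cinv (Cplus Ci (RtoC (d1 0%nat)))) (Cinv (Cplus Ci (RtoC (d2 0%nat)))))).
        pose proof (Cmod_ge_0 (Cminus (Cinv (Cminus Ci (RtoC (d1 0%nat)))) (Cinv (Cminus Ci (RtoC (d2 0%nat)))))).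
        lra. }
  split; apply G; auto.
Qed.

Lemma rho_lower d1 d2 : (forall j k, j <> k -> d1 j ^ 2 <> d1 k ^ 2) ->
  (forall j k, j <> k -> d2 j ^ 2 <> d2 k ^ 2) ->
  forall k, Rabs (d1 k * cc (d1 k) - d2 k * cc (d2 k)) <= rho (diag_op d1) (diag_op d2).
Proof.
  intros H1 H2. unfold rho.
  destruct (opnorm_diag (fun x j => Psi (diag_op d1) x j - Psi (diag_op d2) x j)
    (fun j => d1 j * cc (d1 j) - d2 j * cc (d2 j)) 2) as [_ L]; auto.
  - lra.
  - intros j. eapply Rle_trans. apply Rabs_triang. rewrite Rabs_Ropp.
    destruct (cfacts (d1 j)) as [_ [_ [A _]]]. destruct (cfacts (d2 j)) as [_ [_ [B _]]]. lra.
  - intros x Hx. rewrite (Psi_diag d1 H1 x Hx), (Psi_diag d2 H2 x Hx).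
    apply functional_extensionality. intros j. ring.
Qed.

Lemma rho_ge1 n : (1 <= n)%nat -> 1 <= rho (A_op n) (A_op 0) /\ 1 <= rho (A_op 0) (A_op n).
Proof.
  intros Hn. set (k := pred n). assert (Hk : S k = n) by (unfold k; lia).
  destruct (ev_eq n k Hk) as [E1 E2].
  assert (Hcc : cc (- INR n) = cc (INR n)) by (unfold cc; f_equal; f_equal; ring).
  assert (Hkey : 1 <= 2 * INR n * cc (INR n)).
  { unfold cc. set (s := sqrt (INR n ^ 2 + 1)).
    assert (Hs : s * s = INR n ^ 2 + 1) by (apply sqrt_sqrt; pose proof (pow2_ge_0 (INR n)); lra).
    assert (Hs0 : 0 <= s) by apply sqrt_pos.
    assert (H1 : 1 <= INR n) by (apply (le_INR 1 n) in Hn; simpl in Hn; lra).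
    assert (Hs2 : s <= 2 * INR n) by (apply sq_le; nra).
    assert (0 < s) by nra.
    apply Rmult_le_reg_r with s; auto. rewrite Rmult_assoc, Rinv_l by lra. lra. }
  split.
  - eapply Rle_trans; [|apply (rho_lower (ev n) (ev 0) (ev_distinct n) (ev_distinct 0) k)].
    rewrite E1, E2, Hcc. replace (- INR n * cc (INR n) - INR n * cc (INR n)) with (- (2 * INR n * cc (INR n))) by ring.
    rewrite Rabs_Ropp, Rabs_pos_eq; lra.
  - eapply Rle_trans; [|apply (rho_lower (ev 0) (ev n) (ev_distinct 0) (ev_distinct n) k)].
    rewrite E1, E2, Hcc. replace (INR n * cc (INR n) - - INR n * cc (INR n)) with (2 * INR n * cc (INR n)) by ring.
    rewrite Rabs_pos_eq; lra.
Qed.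

Lemma lim_w : is_lim_seq (fun n => 8 * / INR (S n)) 0.
Proof.
  apply is_lim_seq_spec. intros eps. destruct eps as [eps Heps]. cbn [pos is_lim_seq'].
  destruct (archimed_cor1 (eps/8)) as [N [HN HN0]]. lra.
  exists N. intros n Hn.
  assert (HNpos : 0 < INR N) by (apply lt_0_INR; lia).
  assert (Hle : / INR (S n) <= / INR N) by (apply Rinv_le_contravar; auto; apply le_INR; lia).
  assert (0 < / INR (S n)) by (apply Rinv_0_lt_compat, lt_0_INR; lia).
  cbv beta. rewrite Rminus_0_r, Rabs_pos_eq; lra.
Qed.

Lemma big_nat (r : R) : exists N : nat, r <= INR N.
Proof.
  destruct (archimed (Rabs r)) as [H1 _].
  exists (Z.to_nat (up (Rabs r))).
  assert (0 <= Rabs r) by apply Rabs_pos.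
  assert (0 <= up (Rabs r))%Z.
  { apply le_IZR. lra. }
  rewrite INR_IZR_INZ, Z2Nat.id by auto.
  pose proof (Rle_abs r). lra.
Qed.

Theorem mainTheorem4 :
  (forall n : nat, in_S (A_op n)) /\
  is_lim_seq (fun n => gamma (A_op n) (A_op 0)) 0 /\
  ~ is_lim_seq (fun n => rho (A_op n) (A_op 0)) 0 /\
  (forall alpha : R -> C, in_calA alpha ->
     (exists M : R, forall l : R, M <= l -> alpha l = RtoC 1) ->
     (exists M : R, forall l : R, l <= M -> alpha l = RtoC 0) ->
     exists N : nat, forall n : nat, (N <= n)%nat ->
       opnormC (fun z j => Cminus (fcalc_diag (ev n) alpha z j)
                                  (fcalc_diag (ev 0) alpha z j)) = 1) /\
  ~ (forall A : op, in_S A -> forall eps : R, 0 < eps ->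
       exists delta : R, 0 < delta /\
         forall B : op, in_S B -> gamma A B < delta -> rho A B < eps).
Proof.
  split; [|split; [|split; [|split]]].
  - intros n. apply in_S_diag.
  - apply is_lim_seq_le_le with (fun _ => 0) (fun n => 8 * / INR (S n)).
    + intros n. exact (proj1 (gamma_bound n)).
    + apply is_lim_seq_const.
    + apply lim_w.
  - intros H.
    assert (Hl := is_lim_seq_le_loc (fun _ => 1) (fun n => rho (A_op n) (A_op 0)) 1 0).
    simpl in Hl. apply (Rlt_not_le 1 0 Rlt_0_1). apply Hl; auto.
    + exists 1%nat. intros n Hn. apply rho_ge1; auto.
    + apply is_lim_seq_const.
  - intros alpha _ [M1 HM1] [M0 HM0].
    destruct (big_nat (Rabs M1 + Rabs M0)) as [K HK].
    exists (S K). intros n Hn.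
    assert (Hn' : INR (S K) <= INR n) by (apply le_INR; auto).
    rewrite S_INR in Hn'.
    pose proof (Rle_abs M1). pose proof (Rle_abs (- M0)). rewrite Rabs_Ropp in *. pose proof (Rabs_pos M0). pose proof (Rabs_pos M1).
    assert (Ha1 : alpha (INR n) = RtoC 1) by (apply HM1; lra).
    assert (Ha0 : alpha (- INR n) = RtoC 0) by (apply HM0; lra).
    destruct (opnormC_diag (fun z j => Cminus (fcalc_diag (ev n) alpha z j) (fcalc_diag (ev 0) alpha z j))
      (fun j => Cminus (alpha (ev n j)) (alpha (ev 0 j))) 1) as [U L].
    + lra.
    + intros j. destruct (Nat.eq_dec (S j) n) as [E|E].
      * destruct (ev_eq n j E) as [-> ->]. rewrite Ha1, Ha0.
        replace (Cminus (RtoC 0) (RtoC 1)) with (Copp (RtoC 1)) by ring.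
        rewrite Cmod_opp, Cmod_1. lra.
      * rewrite (ev_ne n j E). replace (Cminus (alpha (ev 0 j)) (alpha (ev 0 j))) with (RtoC 0) by ring.
        rewrite Cmod_0. lra.
    + intros z _. apply functional_extensionality. intros j. unfold fcalc_diag. ring.
    + specialize (L (pred n)).
      assert (E : S (pred n) = n) by lia.
      destruct (ev_eq n _ E) as [E1 E2]. rewrite E1, E2, Ha1, Ha0 in L.
      replace (Cminus (RtoC 0) (RtoC 1)) with (Copp (RtoC 1)) in L by ring.
      rewrite Cmod_opp, Cmod_1 in L. lra.
  - intros H.
    destruct (H (A_op 0) (in_S_diag _) (1/2) ltac:(lra)) as [delta [Hd HB]].
    destruct (archimed_cor1 (delta/8)) as [N [HN HN0]]. lra.
    assert (HNpos : 0 < INR N) by (apply lt_0_INR; lia).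
    assert (Hle : / INR (S N) <= / INR N) by (apply Rinv_le_contravar; auto; apply le_INR; lia).
    destruct (gamma_bound N) as [_ [_ G]].
    specialize (HB (A_op N) (in_S_diag _) ltac:(lra)).
    destruct (rho_ge1 N ltac:(lia)) as [_ R1]. lra.
Qed.
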